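(* Let $X$ be a decomposable continuum and $x\in X$ a null-aposyndetic point such that $X$ is not coastal at $x$. Then for every thick subcontinuum $T\subset X$, the set $\overline{X-T}$ is a thick subcontinuum of $X$.
   Context: A continuum is a nondegenerate compact connected Hausdorff space; it is decomposable if it is the union of two proper subcontinua. A subcontinuum is thick if it is proper and has nonempty interior. A point $x$ is null-aposyndetic if no proper subcontinuum of $X$ contains $x$ in its interior. $\kappa(x;p)$ is the union of all subcontinua $M\neq X$ with $x\in M$, $p\notin M$; $X$ is coastal at $x$ if $\kappa(x;p)$ is dense for some $p\neq x$. *)

(* Defs.v *)
From HB Require Import structures.
From mathcomp Require Import all_boot all_order all_algebra.
From mathcomp Require Import all_classical all_reals all_analysis.
Set Implicit Arguments. Unset Strict Implicit. Unset Printing Implicit Defensive.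
Local Open Scope classical_set_scope.

Section Continua.
Context {T : topologicalType}.

Definition is_continuum_space : Prop :=
  [/\ hausdorff_space T, compact [set: T], connected [set: T]
    & exists a b : T, a <> b].

Definition subcontinuum (M : set T) : Prop :=
  [/\ M !=set0, compact M & connected M].

Definition proper_subcontinuum (M : set T) : Prop :=
  subcontinuum M /\ M <> [set: T].

Definition decomposable : Prop :=
  exists A B : set T, [/\ proper_subcontinuum A, proper_subcontinuum B
                        & A `|` B = [set: T]].

Definition thick (M : set T) : Prop :=
  proper_subcontinuum M /\ (interior M) !=set0.

Definition null_aposyndetic (x : T) : Prop :=
  forall M : set T, proper_subcontinuum M -> ~ (interior M) x.

Definition kappa (x p : T) : set T :=
  \bigcup_(M in [set M : set T | [/\ subcontinuum M, M <> [set: T], M x & ~ M p]]) M.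

Definition coastal_at (x : T) : Prop :=
  exists p : T, p <> x /\ dense (kappa x p).

End Continua.

(* Main.v *)
Require Import Defs.
From HB Require Import structures.
From mathcomp Require Import all_boot all_order all_algebra.
From mathcomp Require Import all_classical all_reals all_analysis.
Local Open Scope classical_set_scope.

Section Aux.
Context {T : topologicalType}.

Lemma disjP {A B : set T} {z} : A `&` B = set0 -> A z -> B z -> False.
Proof. by move=> h a b; have : (A `&` B) z by []; rewrite h. Qed.

Lemma closureU_sub {A B : set T} : closure (A `|` B) `<=` closure A `|` closure B.
Proof.
have cl : closed (closure A `|` closure B) by apply: closedU; apply: closed_closure.
have e := (closure_id _).1 cl.
move=> z hz; rewrite e; apply: (closureS _ hz).
move=> w [aw|bw]; [left|right]; exact: subset_closure.
Qed.

Lemma helper (A P Q Y1 Y2 : set T) : connected [set: T] ->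
  A `|` P `|` Q = setT -> separated P Q -> separated Y1 Y2 ->
  Y1 !=set0 -> Y2 !=set0 -> A `|` P = Y1 `|` Y2 -> A `<=` Y1 -> False.
Proof.
move=> cX U [sPQ1 sPQ2] [sY1 sY2] n1 n2 EU AY.
have d12 := separated_disjoint (conj sY1 sY2).
have Y2P : Y2 `<=` P.
  move=> z y2; have : (A `|` P) z by rewrite EU; right.
  case=> [az|//]; exfalso; exact: (disjP d12 (AY z az) y2).
apply: (connectedPn [set: T]).2 cX.
exists (fun b => if b then Y2 else Y1 `|` Q); split.
- case=> //; case: n1 => w w1; exists w; by left.
- rewrite predeqE => z; split => // _.
  have : (A `|` P `|` Q) z by rewrite U.
  case=> [[az|pz]|qz]; first by left; left; apply: AY.
    have : (Y1 `|` Y2) z by rewrite -EU; right.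
    by case=> h; [left; left|right].
  by left; right.
- split; rewrite predeqE => z; split => // -[h1 h2].
  + have pz := Y2P _ h2.
    case: (closureU_sub _ h1) => h.
    * exact: (disjP sY1 h h2).
    * exact: (disjP sPQ2 pz h).
  + have cp : closure P z by apply: (closureS Y2P).
    case: h1 => h.
    * exact: (disjP sY2 h h2).
    * exact: (disjP sPQ1 cp h).
Qed.

Arguments helper {A P Q Y1 Y2}.

Lemma union_conn (A P Q : set T) : connected [set: T] -> connected A ->
  A `|` P `|` Q = setT -> separated P Q -> connected (A `|` P).
Proof.
move=> cX cA U sPQ; apply/connectedP => E [En EU sE].
have AE : A `<=` E false `|` E true by rewrite -EU => z az; left.
case: (connected_subset sE AE cA) => AY.
- exact: (helper cX U sPQ sE (En false) (En true) EU AY).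
- have sE' : separated (E true) (E false) by rewrite separatedC.
  apply: (helper cX U sPQ sE' (En true) (En false) _ AY).
  by rewrite EU setUC.
Qed.

End Aux.
Arguments union_conn {T A P Q}.

Theorem mainTheorem20 (T : topologicalType) :
  @is_continuum_space T -> @decomposable T ->
  forall x : T, null_aposyndetic x -> ~ coastal_at x ->
  forall Tk : set T, thick Tk -> thick (closure (~` Tk)).
Proof.
move=> [hT coX cX _] _ x nx _ Tk [[[Tn Tc Tcon] TX] [y iy]].
have Tcl : closed Tk by apply: compact_closed.
have oC : open (~` Tk) by apply: closed_openC.
have [z zT] : exists z, ~ Tk z.
  apply: contrapT => h; apply: TX; rewrite predeqE => w; split => // _.
  by apply: contrapT => nw; apply: h; exists w.
have clC : closed (closure (~` Tk)) by apply: closed_closure.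
split; last first.
  exists z; rewrite /interior /=.
  have : nbhs z (~` Tk) by rewrite openE in oC; apply: oC.
  apply: filterS; exact: subset_closure.
split; last first.
  move=> h; have : closure (~` Tk) y by rewrite h.
  move=> /(_ _ iy) [w [nw tw]]; exact: nw.
split.
- by exists z; apply: subset_closure.
- exact: (subclosed_compact clC coX (fun _ _ => I)).
have gen : forall P Q : set T, closure (~` Tk) = P `|` Q ->
    separated P Q -> closed P.
  move=> P Q e [s1 s2]; apply/closure_id.
  apply/seteqP; split; first exact: subset_closure.
  move=> w cw.
  have sub : P `<=` closure (~` Tk) by rewrite e => v pv; left.
  have h : closure (closure (~` Tk)) w by exact: (closureS sub cw).
  rewrite -((closure_id _).1 clC) in h.
  move: h; rewrite e; case => // qw; exfalso; exact: (disjP s1 cw qw).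
have key : forall P Q : set T, closure (~` Tk) = P `|` Q ->
    separated P Q -> Q !=set0 -> Q x.
  move=> P Q e sPQ [q qQ].
  have cP : closed P by apply: gen e sPQ.
  have cQ : closed Q by apply: (gen Q P); [rewrite e setUC|rewrite separatedC].
  have U' : Tk `|` P `|` Q = setT.
    rewrite predeqE => w; split => // _.
    have [tw|ntw] := pselect (Tk w); first by left; left.
    have : closure (~` Tk) w by apply: subset_closure.
    by rewrite e; case; [left; right|right].
  have conn : connected (Tk `|` P) by apply: union_conn cX Tcon U' sPQ.
  have clM : closed (Tk `|` P) by apply: closedU.
  have prop : proper_subcontinuum (Tk `|` P).
    split; first split => //.
    - by case: Tn => w tw; exists w; left.
    - exact: (subclosed_compact clM coX (fun _ _ => I)).
    move=> h.
    have cq : closure (~` Tk) q by rewrite e; right.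
    have oP : open (~` P) by apply: closed_openC.
    have nq : nbhs q (~` P).
      rewrite openE in oP; apply: oP => pq.
      exact: (disjP (separated_disjoint sPQ) pq qQ).
    case: (cq _ nq) => w [ntw npw].
    have : (Tk `|` P) w by rewrite h.
    by case.
  apply: contrapT => nxq; apply: (nx _ prop).
  have oQ : open (~` Q) by apply: closed_openC.
  have : nbhs x (~` Q) by rewrite openE in oQ; apply: oQ.
  apply: filterS => w nw.
  have : (Tk `|` P `|` Q) w by rewrite U'.
  by case => // -[].
apply/connectedP => E [En EU sE].
have x1 : E true x by apply: key EU sE (En true).
have x0 : E false x.
  apply: (key (E true)); [by rewrite EU setUC|by rewrite separatedC|exact: En].
exact: (disjP (separated_disjoint sE) x0 x1).
Qed.
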